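(* For each $n\in\mathbb{N}$ there is a constant $C_n\ge1$ such that for every $s>0$ and every integer $k>1$, the finite group $\mathbb{Z}_k^n$ with the metric $d_k^n$ has a cover $\{\mathcal U_0,\dots,\mathcal U_n\}$ such that the $s$-scale connected components of each $\mathcal U_i$ have diameter at most $C_n s$.
   Context: $d_k$ is the canonical word metric on the cyclic group $\mathbb{Z}_k$ (with respect to the generator $\pm1$), i.e. $d_k(a,b)=\min\{|a-b| \bmod k,\ k-(|a-b|\bmod k)\}$, and $d_k^n((x_1,\dots,x_n),(y_1,\dots,y_n))=\sum_{i=1}^n d_k(x_i,y_i)$. For $s>0$, the $s$-scale connected components of a subset $U$ are the classes of the relation ''joined by a finite chain $x_0,\dots,x_m$ in $U$ with $d(x_i,x_{i+1})<s$''. *)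

(* Defs.v *)
From mathcomp Require Import all_boot.
From Stdlib Require Import Reals.

Set Implicit Arguments.
Unset Strict Implicit.
Unset Printing Implicit Defensive.

(* Canonical word metric on Z_k w.r.t. generator +-1:
   d_k(a,b) = min(|a-b| mod k, k - (|a-b| mod k)). *)
Definition dk (k : nat) (a b : 'I_k) : nat :=
  let m := (maxn a b - minn a b) %% k in minn m (k - m).

Definition ZkN (n k : nat) := {ffun 'I_n -> 'I_k}.

Definition dkn (n k : nat) (x y : ZkN n k) : nat :=
  \sum_(i < n) dk (x i) (y i).

Inductive schain (n k : nat) (U : {set ZkN n k}) (s : R) (x : ZkN n k)
  : ZkN n k -> Prop :=
| schain_refl : x \in U -> schain U s x x
| schain_step : forall y z, schain U s x y -> z \in U ->
    (INR (dkn y z) < s)%R -> schain U s x z.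

(* Main.v *)
Require Import Defs.
From mathcomp Require Import all_boot.
From Stdlib Require Import Reals Lra Psatz.

Ltac natlia := intros;
  repeat match goal with
  | H : is_true (_ <= _) |- _ => move/leP: H => H
  | H : is_true (_ < _) |- _ => move/ltP: H => H
  | H : is_true (_ == _ :> nat) |- _ => move/eqP: H => H
  end;
  try apply: (introT leP);
  repeat match goal with H : ?T |- _ => lazymatch type of T with Prop => revert H end end;
  rewrite -?plusE -?minusE -?multE; intros; nia.

Definition bad (m n a : nat) := (a %% (2*m*n.+1)) %/ (2*m).
Definition hh (m n j a : nat) := a %/ (2*m*n.+1) + (2*m*j.+1 <= a %% (2*m*n.+1)).
Definition cell (m n j k a : nat) :=
  if k %/ (2*m*n.+1) <= hh m n j a then 0 else hh m n j a.

Lemma notzone (m n j a : nat) : 0 < m -> bad m n a != j ->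
  (a %% (2*m*n.+1) < 2*m*j) || (2*m*j + 2*m <= a %% (2*m*n.+1)).
Proof.
move=> m0 /eqP hb. case: leqP => //= h1; rewrite leqNgt; apply/negP=> h2.
apply: hb; apply/eqP; rewrite eqn_leq.
have m2 : 0 < 2*m by rewrite muln_gt0.
rewrite /bad; apply/andP; split.
  rewrite -ltnS ltn_divLR //.
natlia.
rewrite leq_divRL //; natlia.
Qed.

Lemma core_lin (P J m qa ra qb rb : nat) : 0 < m -> J + 2*m <= P -> ra < P -> rb < P ->
 (ra < J) || (J + 2*m <= ra) -> (rb < J) || (J+2*m <= rb) ->
 qa*P + ra <= qb*P + rb -> qb*P + rb < qa*P + ra + m ->
 qa + (J + 2*m <= ra) = qb + (J+2*m <= rb).
Proof.
move=> m0 JP la lb /orP za /orP zb h1 h2.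
have q1 : qa <= qb.
  case: (leqP qa qb) => // h; have := leq_mul h (leqnn P); natlia.
have q2 : qb <= qa.+1.
  case: (leqP qb qa.+1) => // h; have := leq_mul h (leqnn P); natlia.
have [e|e] : qb = qa \/ qb = qa.+1 by natlia.
all: subst qb.
all: case: (leqP (J + 2*m) ra) => e1; case: (leqP (J+2*m) rb) => e2 /=.
all: case: za => z1; case: zb => z2; natlia.
Qed.

Lemma hh_lin (m n j a b : nat) : 0 < m -> j <= n -> a <= b -> b - a < m ->
  bad m n a != j -> bad m n b != j -> hh m n j a = hh m n j b.
Proof.
move=> m0 jn ab ba hA hB.
have za := @notzone m n j a m0 hA. have zb := @notzone m n j b m0 hB.
have P0 : 0 < 2*m*n.+1 by rewrite !muln_gt0 m0.
have EP : 2*m*j + 2*m <= 2*m*n.+1.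
  by natlia.
rewrite /hh; have -> : 2*m*j.+1 = 2*m*j + 2*m by natlia.
apply: (@core_lin (2*m*n.+1) (2*m*j) m) => //; try exact: ltn_pmod.
  by rewrite -!divn_eq.
by rewrite -!divn_eq; natlia.
Qed.

Lemma core_wrap (P J m Q qb rb k : nat) : 0 < m -> J + 2*m <= P -> rb < P ->
  (rb < J) || (J+2*m <= rb) -> Q * P <= k -> qb*P + rb < k -> k < qb*P + rb + m ->
  Q <= qb + (J + 2*m <= rb).
Proof.
move=> m0 JP lb /orP zb h1 h2 h3.
case: (leqP Q qb) => [h|h]; first by natlia.
case: (leqP qb.+2 Q) => h4.
  have := leq_mul h4 (leqnn P); natlia.
have eQ : Q = qb.+1 by natlia.
subst Q.
case: (leqP (J + 2*m) rb) => e /=; case: zb => z; natlia.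
Qed.

Lemma cell_wrap (m n j k a b : nat) : 0 < m -> j <= n -> a <= b -> b < k ->
  k - (b - a) < m -> bad m n a != j -> bad m n b != j ->
  cell m n j k a = cell m n j k b.
Proof.
move=> m0 jn ab bk kb hA hB.
have zb := @notzone m n j b m0 hB.
have P0 : 0 < 2*m*n.+1 by rewrite !muln_gt0 m0.
have EP : 2*m*j + 2*m <= 2*m*n.+1 by natlia.
have am : a < m by natlia.
have aP : a < 2*m*n.+1 by natlia.
have ha : hh m n j a = 0.
  rewrite /hh divn_small // modn_small //; have -> : (2*m*j.+1 <= a) = false.
    apply/negbTE; rewrite -ltnNge; natlia.
  by [].
have hb : k %/ (2*m*n.+1) <= hh m n j b.
  rewrite /hh; have -> : 2*m*j.+1 = 2*m*j + 2*m by natlia.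
  apply: (@core_wrap (2*m*n.+1) (2*m*j) m _ _ _ k) => //; try exact: ltn_pmod.
  - exact: leq_divM.
  - by rewrite -divn_eq.
  - rewrite -divn_eq; natlia.
by rewrite /cell ha hb; case: (_ <= 0).
Qed.

Lemma core_bound (P k Q qa ra qb rb ba bb : nat) : 0 < P -> ba <= 1 -> bb <= 1 ->
  ra < P -> rb < P -> k = Q * P + (k %% P) -> k %% P < P ->
  qa * P + ra <= qb * P + rb -> qb * P + rb < k ->
  (qa + ba = qb + bb) \/ (Q <= qa + ba /\ Q <= qb + bb) \/
  (qa + ba = 0 /\ Q <= qb + bb) \/ (Q <= qa + ba /\ qb + bb = 0) ->
  (qb*P + rb - (qa*P + ra) < 3 * P) \/ (k - (qb*P + rb - (qa*P + ra)) < 3 * P).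
Proof.
move: (k %% P) => rk.
move=> P0 b1 b2 la lb ek lk h1 h2 [e|[[e1 e2]|[[e1 e2]|[e1 e2]]]].
- left. have q : qb <= qa.+1 by natlia.
  have := leq_mul q (leqnn P); natlia.
- left. have q : Q <= qa.+1 by natlia.
  have := leq_mul q (leqnn P); natlia.
- right. have q : Q <= qb.+1 by natlia.
  have qa0 : qa = 0 by natlia. subst qa.
  have := leq_mul q (leqnn P); natlia.
- left. have qb0 : qb = 0 by natlia. subst qb.
  have : qa * P <= 0 * P by apply: leq_mul; natlia.
  natlia.
Qed.

Lemma cell_bound (m n j k a b : nat) : 0 < m -> a <= b -> b < k ->
  cell m n j k a = cell m n j k b ->
  minn (b - a) (k - (b - a)) < 3 * (2*m*n.+1).
Proof.
move=> m0 ab bk.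
have P0 : 0 < 2*m*n.+1 by rewrite !muln_gt0 m0.
rewrite /cell /hh => ce.
have H := @core_bound (2*m*n.+1) k (k %/ (2*m*n.+1)) (a %/ (2*m*n.+1)) (a %% (2*m*n.+1))
  (b %/ (2*m*n.+1)) (b %% (2*m*n.+1)) (2*m*j.+1 <= a %% (2*m*n.+1))
  (2*m*j.+1 <= b %% (2*m*n.+1)) P0 (leq_b1 _) (leq_b1 _) (ltn_pmod _ P0) (ltn_pmod _ P0)
  (divn_eq k _) (ltn_pmod _ P0).
rewrite -!divn_eq in H.
rewrite gtn_min; apply/orP.
have : (b - a < 3 * (2*m*n.+1)) \/ (k - (b - a) < 3 * (2*m*n.+1)).
  apply: H => //.
  move: ce; case: ifP => h1; case: ifP => h2 => e.
  - by right; left; split.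
  - by right; right; right; split.
  - by right; right; left; split.
  - by left.
by [].
Qed.

Lemma dkC k (a b : 'I_k) : dk a b = dk b a.
Proof. rewrite /dk. by rewrite maxnC [minn (nat_of_ord b) _]minnC. Qed.

Lemma dk_le k (a b : 'I_k) : a <= b -> dk a b = minn (b - a) (k - (b - a)).
Proof.
move=> ab; rewrite /dk (maxn_idPr ab) (minn_idPl ab) modn_small //.
have := ltn_ord b; natlia.
Qed.

Lemma cell_step (m n j k : nat) (a b : 'I_k) : 0 < m -> j <= n ->
  bad m n a != j -> bad m n b != j -> dk a b < m ->
  cell m n j k a = cell m n j k b.
Proof.
move=> m0 jn.
wlog ab : a b / a <= b.
  move=> W hA hB d; case: (leqP a b) => h; first exact: W.
  by rewrite [RHS](W b a) ?(ltnW h) // dkC.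
move=> hA hB; rewrite dk_le // gtn_min => /orP [h|h].
  by rewrite /cell (@hh_lin m n j a b m0 jn ab h hA hB).
exact: (@cell_wrap m n j k a b m0 jn ab (ltn_ord b) h hA hB).
Qed.

Lemma cell_dk (m n j k : nat) (a b : 'I_k) : 0 < m ->
  cell m n j k a = cell m n j k b -> dk a b < 3 * (2*m*n.+1).
Proof.
move=> m0.
wlog ab : a b / a <= b.
  move=> W e; case: (leqP a b) => h; first exact: W.
  by rewrite dkC; apply: W; rewrite ?(ltnW h).
move=> e; rewrite dk_le //; exact: (@cell_bound m n j k a b m0 ab (ltn_ord b) e).
Qed.

Lemma dk_eq0 k (a b : 'I_k) : dk a b = 0 -> a = b.
Proof.
wlog ab : a b / a <= b.
  move=> W e; case: (leqP a b) => h; first exact: W.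
  by apply/esym/W; rewrite ?(ltnW h) // dkC.
rewrite dk_le // => e; apply: val_inj => /=.
have := ltn_ord b; move: e; rewrite /minn; case: ifP => _ e; natlia.
Qed.

Lemma dk_le_dkn n k (x y : ZkN n k) (i : 'I_n) : dk (x i) (y i) <= dkn x y.
Proof. by rewrite /dkn (bigD1 i) //= leq_addr. Qed.

Lemma dkn_eq0 n k (x y : ZkN n k) : dkn x y = 0 -> x = y.
Proof.
move=> e; apply/ffunP => i; apply: dk_eq0.
by have := @dk_le_dkn n k x y i; rewrite e leqn0 => /eqP.
Qed.

Lemma pigeon n (f : 'I_n -> nat) : exists j : 'I_n.+1, forall i, f i != j.
Proof.
case: (pickP (fun j : 'I_n.+1 => j \notin [set (inord (f i) : 'I_n.+1) | i : 'I_n])).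
  move=> j /imsetP hj; exists j => i; apply/negP => /eqP e; apply: hj.
  by exists i => //; apply: val_inj; rewrite /= -e inordK // e ltn_ord.
move=> H; exfalso.
have : [set: 'I_n.+1] \subset [set (inord (f i) : 'I_n.+1) | i : 'I_n].
  by apply/subsetP => j _; have := H j => /negbFE.
move/subset_leq_card; rewrite cardsT card_ord.
move/leq_trans/(_ (leq_imset_card _ _)); rewrite ?cardsT card_ord ltnn.
by [].
Qed.

Lemma dk_refl k (a : 'I_k) : dk a a = 0.
Proof. by rewrite dk_le // subnn min0n. Qed.

Lemma dkn_refl n k (x : ZkN n k) : dkn x x = 0.
Proof. by rewrite /dkn big1 // => i _; rewrite dk_refl. Qed.

Theorem lemma4p9 :
  forall n : nat, exists C : R, (1 <= C)%R /\
    forall (s : R) (k : nat), (0 < s)%R -> (1 < k)%N ->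
      exists U : 'I_n.+1 -> {set ZkN n k},
        (forall x : ZkN n k, exists i : 'I_n.+1, x \in U i) /\
        (forall (i : 'I_n.+1) (x y : ZkN n k),
            schain (U i) s x y -> (INR (dkn x y) <= C * s)%R).
Proof.
move=> n; exists (INR (12 * (n * n.+1)) + 1)%R; split.
  have := pos_INR (12 * (n * n.+1)); lra.
have CP : (0 <= INR (12 * (n * n.+1)) + 1)%R.
  have := pos_INR (12 * (n * n.+1)); lra.
move=> s k s0 k1.
case: (Rlt_le_dec s 1) => hs.
- exists (fun _ => setT); split.
    by move=> x; exists ord0; rewrite inE.
  move=> i x y H.
  have -> : y = x.
    elim: H => [//| y' z _ IH _ hd]; subst y'.
    have h1 : (INR (dkn x z) < INR 1)%R by rewrite /=; lra.
    move/INR_lt: h1 => /ltP; rewrite ltnS leqn0 => /eqP /dkn_eq0 ->.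
    by [].
  rewrite dkn_refl /=; apply: Rmult_le_pos => //; lra.
- pose m := Z.to_nat (up s).
  have [ar1 ar2] := archimed s.
  have upp : (0 <= up s)%Z.
    apply: le_IZR; lra.
  have Mm : INR m = IZR (up s) by rewrite /m INR_IZR_INZ Znat.Z2Nat.id.
  have m0 : 0 < m.
    apply/ltP; apply: INR_lt; rewrite Mm /=; lra.
  exists (fun j : 'I_n.+1 => [set x : ZkN n k | [forall i, bad m n (x i) != j]]).
  split.
    move=> x; have [j hj] := @pigeon n (fun i => bad m n (x i)); exists j.
    by rewrite inE; apply/forallP => i; exact: hj.
  move=> j x y H.
  have jn : (j <= n)%N by rewrite -ltnS ltn_ord.
  have inv : y \in [set x : ZkN n k | [forall i, bad m n (x i) != j]] /\
      forall i, cell m n j k (y i) = cell m n j k (x i).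
    elim: H => [hx | y' z _ [hy IH] hz hd]; first by split.
    split => // i; rewrite -IH; symmetry.
    move: hy hz; rewrite !inE => /forallP hy /forallP hz.
    apply: cell_step => //.
    apply: leq_ltn_trans (@dk_le_dkn n k y' z i) _.
    apply/ltP; apply: INR_lt; rewrite Mm; lra.
  case: inv => _ inv.
  have bnd : (dkn x y <= n * (3 * (2*m*n.+1)))%N.
    have : \sum_(i < n) dk (x i) (y i) <= \sum_(i < n) (3 * (2*m*n.+1)).
      by apply: leq_sum => i _; apply: ltnW; apply: cell_dk => //; rewrite inv.
    by rewrite sum_nat_const card_ord.
  have e : (n * (3 * (2*m*n.+1)) = 6 * (n * n.+1) * m)%N by natlia.
  move/leP: bnd => /le_INR; rewrite e !mult_INR => bnd.
  rewrite mult_INR in CP *.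
  have N0 : (0 <= INR n * INR n.+1)%R by apply: Rmult_le_pos; apply: pos_INR.
  have h6 : INR 6 = 6%R by rewrite /=; lra.
  have h12 : INR 12 = 12%R by rewrite /=; lra.
  rewrite h6 in bnd; rewrite h12.
  have Mb : (INR m <= s + 1)%R by rewrite Mm; lra.
  move: (INR n * INR n.+1)%R (INR m) N0 Mb bnd => N M N0 Mb bnd.
  nra.
Qed.
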